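(* Let $F$ be an Archimedean vector lattice with universal completion $F^{u}$, and let $E$ be a regular sublattice of $F$. Then the order closure $\overline{E}^{F^{u}}_{o}$ of $E$ viewed as a sublattice of $F^{u}$ is the universal completion of $E$ (i.e. it is universally complete and contains $E$ as an order dense sublattice), and $\overline{E}^{F}_{o}=\overline{E}^{F^{u}}_{o}\cap F$.
   Context: An order complete vector lattice is universally complete if every set of pairwise disjoint elements is order bounded. The universal completion $F^u$ of an Archimedean $F$ is the (unique) universally complete vector lattice containing $F$ as an order dense sublattice. Order convergence: a net converges to $f$ if there is a set $G$ with $\bigwedge G=0$ such that for each $g\in G$ the net is eventually in $[f-g,f+g]$. A set is order closed if it contains order limits of all its nets; the order closure $\overline{E}_o$ (in a given ambient lattice) is the intersection of all order closed sets containing $E$. A sublattice $E\subset F$ is regular if $\bigwedge_E G=0$ implies $\bigwedge_F G=0$ for all $G\subset E$; it is order dense in $H\supset E$ if each $h>0$ in $H$ dominates some $e\in E$ with $e>0$. *)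

(* Defs.v *)
From HB Require Import structures.
From mathcomp Require Import all_boot all_order all_algebra.
From mathcomp Require Import reals.
Set Implicit Arguments. Unset Strict Implicit. Unset Printing Implicit Defensive.
Import Order.TTheory GRing.Theory Num.Theory.
Local Open Scope ring_scope.

Section VL.
Context {R : realType} {V : lmodType R} (le : V -> V -> Prop).

Definition is_upper_in (S G : V -> Prop) (x : V) : Prop :=
  S x /\ forall g, G g -> le g x.
Definition is_lower_in (S G : V -> Prop) (x : V) : Prop :=
  S x /\ forall g, G g -> le x g.
Definition is_sup_in (S G : V -> Prop) (x : V) : Prop :=
  is_upper_in S G x /\ forall y, is_upper_in S G y -> le x y.
Definition is_inf_in (S G : V -> Prop) (x : V) : Prop :=
  is_lower_in S G x /\ forall y, is_lower_in S G y -> le y x.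

Definition setAll : V -> Prop := fun _ => True.
Definition pair2 (x y : V) : V -> Prop := fun z => z = x \/ z = y.

Record vector_lattice : Prop := {
  vl_refl : forall x, le x x;
  vl_antisym : forall x y, le x y -> le y x -> x = y;
  vl_trans : forall x y z, le x y -> le y z -> le x z;
  vl_add : forall x y z, le x y -> le (x + z) (y + z);
  vl_scale : forall (a : R) x y, 0 <= a -> le x y -> le (a *: x) (a *: y);
  vl_sup : forall x y, exists s, is_sup_in setAll (pair2 x y) s }.

Record sublattice (S : V -> Prop) : Prop := {
  sl_0 : S 0;
  sl_add : forall x y, S x -> S y -> S (x + y);
  sl_scale : forall (a : R) x, S x -> S (a *: x);
  sl_sup : forall x y s, S x -> S y -> is_sup_in setAll (pair2 x y) s -> S s }.

Definition incl (A B : V -> Prop) : Prop := forall x, A x -> B x.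

Definition archimedean_in (S : V -> Prop) : Prop :=
  forall x y, S x -> S y -> le 0 x -> (forall n : nat, le (n%:R *: x) y) -> x = 0.

Definition order_complete_in (S : V -> Prop) : Prop :=
  forall G, incl G S -> (exists g, G g) -> (exists u, is_upper_in S G u) ->
    exists s, is_sup_in S G s.

Definition is_abs (x a : V) : Prop := is_sup_in setAll (pair2 x (- x)) a.
Definition disjoint (x y : V) : Prop :=
  forall a b, is_abs x a -> is_abs y b -> is_inf_in setAll (pair2 a b) 0.

Definition order_bounded_in (S G : V -> Prop) : Prop :=
  exists l u, S l /\ S u /\ forall g, G g -> le l g /\ le g u.

Definition universally_complete_in (S : V -> Prop) : Prop :=
  order_complete_in S /\
  forall D, incl D S -> (forall x y, D x -> D y -> x <> y -> disjoint x y) ->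
    order_bounded_in S D.

Definition lt (x y : V) : Prop := le x y /\ x <> y.

Definition order_dense_in (E H : V -> Prop) : Prop :=
  forall h, H h -> lt 0 h -> exists e, E e /\ lt 0 e /\ le e h.

Definition regular_in (E F : V -> Prop) : Prop :=
  forall G, incl G E -> is_inf_in E G 0 -> is_inf_in F G 0.

Definition directed (I : Type) (leI : I -> I -> Prop) : Prop :=
  inhabited I /\ (forall i, leI i i) /\
  (forall i j k, leI i j -> leI j k -> leI i k) /\
  (forall i j, exists k, leI i k /\ leI j k).

Definition order_converges_in (S : V -> Prop) (I : Type) (leI : I -> I -> Prop)
    (x : I -> V) (f : V) : Prop :=
  exists G, incl G S /\ is_inf_in S G 0 /\
    forall g, G g -> exists i0, forall i, leI i0 i ->
      le (f - g) (x i) /\ le (x i) (f + g).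

Definition order_closed_in (S A : V -> Prop) : Prop :=
  incl A S /\
  forall (I : Type) (leI : I -> I -> Prop) (x : I -> V) (f : V),
    directed leI -> (forall i, A (x i)) -> S f ->
    order_converges_in S leI x f -> A f.

Definition order_closure_in (S E : V -> Prop) : V -> Prop :=
  fun v => forall A, order_closed_in S A -> incl E A -> A v.

Definition universal_completion_of (E U : V -> Prop) : Prop :=
  sublattice U /\ universally_complete_in U /\ incl E U /\ sublattice E /\
  order_dense_in E U.

End VL.

(* Main.v *)
Require Import Defs.
From HB Require Import structures.
From mathcomp Require Import all_boot all_order all_algebra.
From mathcomp Require Import reals.
From Stdlib Require Import Classical ClassicalEpsilon.
Set Implicit Arguments. Unset Strict Implicit. Unset Printing Implicit Defensive.
Import Order.TTheory GRing.Theory Num.Theory.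
Local Open Scope ring_scope.

Section Basics.
Variables (R : realType) (V : lmodType R) (le : V -> V -> Prop).
Hypothesis VL : vector_lattice le.
Local Notation "x ⊑ y" := (le x y) (at level 70).
Local Notation SA := (setAll (V:=V)).

Lemma lrefl x : x ⊑ x. Proof. exact: vl_refl VL x. Qed.
Lemma ltr x y z : x ⊑ y -> y ⊑ z -> x ⊑ z. Proof. exact: (vl_trans VL (y:=y)). Qed.
Lemma lanti x y : x ⊑ y -> y ⊑ x -> x = y. Proof. move=> h1 h2; exact: (vl_antisym VL h1 h2). Qed.
Lemma laddr z x y : x ⊑ y -> x + z ⊑ y + z. Proof. move=> h; exact: (vl_add VL z h). Qed.
Lemma laddl z x y : x ⊑ y -> z + x ⊑ z + y.
Proof. by move=> h; rewrite ![z + _]addrC; apply: laddr. Qed.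
Lemma ladd2 a b c d : a ⊑ b -> c ⊑ d -> a + c ⊑ b + d.
Proof. by move=> h1 h2; exact: (ltr (laddr c h1) (laddl b h2)). Qed.
Lemma laddr_cancel z x y : x + z ⊑ y + z -> x ⊑ y.
Proof. by move=> h; have := laddr (- z) h; rewrite !addrK. Qed.
Lemma lopp x y : x ⊑ y -> - y ⊑ - x.
Proof.
move=> h; have := laddr (- x - y) h.
by rewrite addrA addrN add0r addrCA addrN addr0.
Qed.
Lemma loppK x y : - y ⊑ - x -> x ⊑ y.
Proof. by move=> /lopp; rewrite !opprK. Qed.
Lemma lsub0 x y : x ⊑ y -> 0 ⊑ y - x.
Proof. by move=> h; have := laddr (- x) h; rewrite addrN. Qed.
Lemma lsub0K x y : 0 ⊑ y - x -> x ⊑ y.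
Proof. by move=> h; have := laddr x h; rewrite add0r subrK. Qed.
Lemma lle0 x y : x - y ⊑ 0 -> x ⊑ y.
Proof. by move=> h; have := laddr y h; rewrite add0r subrK. Qed.
Lemma lle0K x y : x ⊑ y -> x - y ⊑ 0.
Proof. by move=> h; have := laddr (- y) h; rewrite addrN. Qed.
Lemma lsubg x g : 0 ⊑ g -> x - g ⊑ x.
Proof. by move=> h; apply: lle0; rewrite addrAC subrr add0r; have := lopp h; rewrite oppr0. Qed.
Lemma laddg x g : 0 ⊑ g -> x ⊑ x + g.
Proof. by move=> h; have := laddl x h; rewrite addr0. Qed.
Lemma lscale (a : R) x y : 0 <= a -> x ⊑ y -> a *: x ⊑ a *: y.
Proof. move=> ha h; exact: (vl_scale VL ha h). Qed.

Definition join (x y : V) : V :=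
  proj1_sig (constructive_indefinite_description _ (vl_sup VL x y)).
Lemma jP x y : is_sup_in le SA (pair2 x y) (join x y).
Proof. rewrite /join; case: constructive_indefinite_description => s hs //=. Qed.
Lemma join_l x y : x ⊑ join x y.
Proof. by have [[_ h] _] := jP x y; apply: h; left. Qed.
Lemma join_r x y : y ⊑ join x y.
Proof. by have [[_ h] _] := jP x y; apply: h; right. Qed.
Ltac jj := first [apply: join_l | apply: join_r].
Lemma join_lub x y z : x ⊑ z -> y ⊑ z -> join x y ⊑ z.
Proof. by move=> h1 h2; have [_ h] := jP x y; apply: h; split=> // g [] ->. Qed.
Lemma joinC x y : join x y = join y x.
Proof. by apply: lanti; apply: join_lub; jj. Qed.
Lemma join_mono x1 x2 y1 y2 : x1 ⊑ y1 -> x2 ⊑ y2 -> join x1 x2 ⊑ join y1 y2.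
Proof. by move=> h1 h2; apply: join_lub; [exact: (ltr h1 (join_l _ _))|exact: (ltr h2 (join_r _ _))]. Qed.
Lemma joinD x y z : join (x + z) (y + z) = join x y + z.
Proof.
apply: lanti.
  by apply: join_lub; apply: laddr; jj.
apply: (@laddr_cancel (- z)); rewrite addrK.
by apply: join_lub; apply: (@laddr_cancel z); rewrite subrK; jj.
Qed.
Lemma join_id x y : y ⊑ x -> join x y = x.
Proof. by move=> h; apply: lanti; [apply: join_lub => //; apply: lrefl|apply: join_l]. Qed.

Definition meet (x y : V) : V := - join (- x) (- y).
Lemma meet_l x y : meet x y ⊑ x.
Proof. by apply: loppK; rewrite opprK; apply: join_l. Qed.
Lemma meet_r x y : meet x y ⊑ y.
Proof. by apply: loppK; rewrite opprK; apply: join_r. Qed.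
Lemma meet_glb x y z : z ⊑ x -> z ⊑ y -> z ⊑ meet x y.
Proof. by move=> h1 h2; apply: loppK; rewrite opprK; apply: join_lub; apply: lopp. Qed.
Lemma meetC x y : meet x y = meet y x.
Proof. by rewrite /meet joinC. Qed.
Lemma meet_id x y : x ⊑ y -> meet x y = x.
Proof. by move=> h; apply: lanti; [apply: meet_l|apply: meet_glb => //; apply: lrefl]. Qed.

Definition near (x y g : V) := x - g ⊑ y /\ y ⊑ x + g.
Lemma near_refl x g : 0 ⊑ g -> near x x g.
Proof. by move=> h; split; [apply: lsubg|apply: laddg]. Qed.
Lemma near_join x1 x2 y1 y2 g : near x1 y1 g -> near x2 y2 g ->
  near (join x1 x2) (join y1 y2) g.
Proof.
move=> [a1 b1] [a2 b2]; split.
  by rewrite -joinD; apply: join_mono.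
by rewrite -joinD; apply: join_mono.
Qed.
Lemma near_opp x y g : near x y g -> near (- x) (- y) g.
Proof.
move=> [a b]; split.
  by have := lopp b; rewrite opprD.
by have := lopp a; rewrite opprB addrC.
Qed.
Lemma near_meet x1 x2 y1 y2 g : near x1 y1 g -> near x2 y2 g ->
  near (meet x1 x2) (meet y1 y2) g.
Proof. by move=> h1 h2; apply: near_opp; apply: near_join; apply: near_opp. Qed.
Lemma near_add x y c g : near x y g -> near (x + c) (y + c) g.
Proof. by move=> [a b]; split; [rewrite addrAC; apply: laddr|rewrite addrAC; apply: laddr]. Qed.
Lemma near_addl x y c g : near x y g -> near (c + x) (c + y) g.
Proof. by rewrite ![c + _]addrC; apply: near_add. Qed.

Lemma abs_ge0 x : 0 ⊑ join x (- x).
Proof.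
have h : x + - x ⊑ join x (- x) + join x (- x) by apply: ladd2; jj.
rewrite addrN in h.
have h2 : (0:R) <= 2^-1 by rewrite invr_ge0 ler0n.
have := lscale h2 h.
by rewrite scaler0 -mulr2n -scaler_nat scalerA mulVf ?scale1r // pnatr_eq0.
Qed.
Lemma abs_id x : 0 ⊑ x -> join x (- x) = x.
Proof.
move=> h; apply: join_id; apply: ltr (h).
by rewrite -oppr0; apply: lopp.
Qed.

Lemma posneg v : join v 0 - join (- v) 0 = v.
Proof.
have e : join (- v) 0 = join 0 v - v.
  by have := joinD (- v) 0 v; rewrite addNr add0r => ->; rewrite addrK.
by rewrite e opprB joinC addrCA subrr addr0.
Qed.

Lemma inf_ge0 G g : is_inf_in le SA G 0 -> G g -> 0 ⊑ g.
Proof. by move=> [[_ h] _]; apply: h. Qed.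
Lemma inf_le0 G w : is_inf_in le SA G 0 -> (forall g, G g -> w ⊑ g) -> w ⊑ 0.
Proof. by move=> [_ h] hw; apply: h. Qed.


Section SL.
Variable S : V -> Prop.
Hypothesis SS : sublattice le S.
Lemma sl_opp x : S x -> S (- x).
Proof. by move=> h; have := sl_scale SS (-1) h; rewrite scaleN1r. Qed.
Lemma sl_subr x y : S x -> S y -> S (x - y).
Proof. by move=> h1 h2; apply: (sl_add SS h1); apply: sl_opp. Qed.
Lemma sl_join x y : S x -> S y -> S (join x y).
Proof. by move=> h1 h2; apply: (sl_sup SS h1 h2 (jP x y)). Qed.
Lemma sl_meet x y : S x -> S y -> S (meet x y).
Proof. by move=> h1 h2; apply: sl_opp; apply: sl_join; apply: sl_opp. Qed.
End SL.

Hypothesis UC : universally_complete_in le SA.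

Lemma sup_ex G : (exists g, G g) -> (exists u, forall g, G g -> g ⊑ u) ->
  exists s, is_sup_in le SA G s.
Proof.
move=> ne [u hu]; apply: (proj1 UC) => //; exists u; by split.
Qed.

Lemma inf_ex G : (exists g, G g) -> (exists l, forall g, G g -> l ⊑ g) ->
  exists s, is_inf_in le SA G s.
Proof.
move=> [g0 hg0] [l hl].
have [s [[_ hs1] hs2]] : exists s, is_sup_in le SA (fun z => G (- z)) s.
  apply: sup_ex; first by exists (- g0); rewrite opprK.
  by exists (- l) => z hz; apply: loppK; rewrite opprK; apply: hl.
exists (- s); split.
  split=> // g hg; apply: loppK; rewrite opprK; apply: hs1; by rewrite opprK.
move=> w [_ hw]; apply: loppK; rewrite opprK; apply: hs2; split=> // z hz.
by apply: loppK; rewrite opprK; apply: hw.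
Qed.

Lemma archV e v : 0 ⊑ e -> (forall n : nat, n%:R *: e ⊑ v) -> e = 0.
Proof.
move=> he hn.
have [s [[_ hs1] hs2]] : exists s, is_sup_in le SA (fun z => exists n : nat, z = n%:R *: e) s.
  apply: sup_ex; first by exists (0%:R *: e), 0%N.
  by exists v => z [n ->].
have h : s ⊑ s - e.
  apply: hs2; split=> // z [n ->].
  have := hs1 _ (ex_intro _ n.+1 erefl).
  rewrite mulrSr scalerDl scale1r => /(laddr (- e)); by rewrite addrK.
have h2 : e ⊑ 0.
  have := laddr (e - s) h; by rewrite addrCA subrr addr0 addrA subrK subrr.
exact: lanti h2 he.
Qed.

Variables F E : V -> Prop.
Hypothesis SF : sublattice le F.
Hypothesis DF : order_dense_in le F SA.
Hypothesis SE : sublattice le E.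
Hypothesis EF : incl E F.
Hypothesis RE : regular_in le E F.

Lemma regFV G : incl G F -> is_inf_in le F G 0 -> is_inf_in le SA G 0.
Proof.
move=> GF [[F0 h0] h]; split; first by split.
move=> w [_ hw].
have hp : forall g, G g -> join w 0 ⊑ g by move=> g hg; apply: join_lub; auto.
case: (classic (0 = join w 0)) => [e|ne].
  by rewrite e; apply: join_l.
have [f [Ff [[f0 fne] fp]]] := DF I (conj (join_r w 0) ne).
have : f ⊑ 0 by apply: h; split=> // g hg; exact: (ltr fp (hp g hg)).
by move=> f0'; case: fne; apply: lanti.
Qed.

Lemma regEV G : incl G E -> is_inf_in le E G 0 -> is_inf_in le SA G 0.
Proof. by move=> GE h; apply: regFV; [move=> x /GE /EF|apply: RE]. Qed.

Definition C := order_closure_in le SA E.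

Lemma C_closed : order_closed_in le SA C.
Proof.
split=> // J leI x f dI hx _ hc A hA hEA.
exact: (proj2 hA J leI x f dI (fun i => hx i A hA hEA) I hc).
Qed.
Lemma E_C : incl E C.
Proof. by move=> x hx A _ h; apply: h. Qed.
Lemma C_min A : order_closed_in le SA A -> incl E A -> incl C A.
Proof. by move=> h1 h2 x hx; apply: hx. Qed.


Lemma lswap w s b : w ⊑ s - b -> b ⊑ s - w.
Proof. by move=> h; have := laddr (b - w) h; rewrite addrCA subrr addr0 addrA subrK. Qed.
Lemma lself s w : s ⊑ s - w -> w ⊑ 0.
Proof. by move=> h; have := laddr (w - s) h; rewrite addrCA subrr addr0 addrA subrK subrr. Qed.

Lemma sup_pair_eq x y s : is_sup_in le SA (pair2 x y) s -> s = join x y.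
Proof.
move=> [[_ h1] h2]; apply: lanti.
  by apply: h2; split=> // g [] ->; jj.
by apply: join_lub; apply: h1; [left|right].
Qed.

Lemma C_lip (phi : V -> V) :
  (forall x y g, 0 ⊑ g -> near x y g -> near (phi x) (phi y) g) ->
  (forall x, E x -> C (phi x)) -> forall x, C x -> C (phi x).
Proof.
move=> hphi hE; apply: (C_min (A := fun v => C (phi v))) => //.
split=> // J leI x f dJ hx _ [G [_ [hG hconv]]].
apply: (proj2 C_closed J leI (fun i => phi (x i)) (phi f) dJ hx I).
exists G; split=> //; split=> // g hg.
have [i0 hi0] := hconv g hg; exists i0 => i hi.
exact: (hphi _ _ _ (inf_ge0 hG hg) (hi0 i hi)).
Qed.

Lemma C_scale_pos (a : R) : 0 < a -> forall x, C x -> C (a *: x).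
Proof.
move=> ha; apply: (C_min (A := fun v => C (a *: v))); last first.
  by move=> v hv; apply: E_C; exact: (sl_scale SE a hv).
split=> // J leI x f dJ hx _ [G [_ [hG hconv]]].
apply: (proj2 C_closed J leI (fun i => a *: x i) (a *: f) dJ hx I).
exists (fun h => exists g, G g /\ h = a *: g); split=> //; split.
  split; first split; [constructor|move=> h /= [g [hg ->]]|].
  by have := lscale (ltW ha) (inf_ge0 hG hg); rewrite scaler0.
  move=> w [_ hw].
  have hw' : a^-1 *: w ⊑ 0.
    apply: (inf_le0 hG) => g hg.
    have hai : 0 < a^-1 by rewrite invr_gt0.
    have := lscale (ltW hai) (hw _ (ex_intro _ g (conj hg erefl))).
    by rewrite scalerA mulVf ?scale1r // gt_eqF.
  have := lscale (ltW ha) hw'.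
  by rewrite scaler0 scalerA mulfV ?scale1r // gt_eqF.
move=> h [g [hg ->]].
have [i0 hi0] := hconv g hg; exists i0 => i hi.
have [h1 h2] := hi0 i hi.
by split; [rewrite -scalerBr|rewrite -scalerDr]; apply: lscale => //; apply: ltW.
Qed.

Lemma C_opp x : C x -> C (- x).
Proof.
apply: (C_lip (phi := fun v => - v)).
  by move=> ? ? ? _; apply: near_opp.
by move=> v hv; apply: E_C; exact: (sl_opp SE hv).
Qed.

Lemma C_scale (a : R) x : C x -> C (a *: x).
Proof.
move=> hx; case: (ltrgtP 0 a) => ha.
- exact: C_scale_pos.
- rewrite -[a *: x]opprK -scaleNr; apply: C_opp; apply: C_scale_pos => //.
  by rewrite oppr_gt0.
- by rewrite -ha scale0r; apply: E_C; exact: (sl_0 SE).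
Qed.

Lemma C_add x y : C x -> C y -> C (x + y).
Proof.
have step1 : forall e, E e -> forall x, C x -> C (x + e).
  move=> e he; apply: (C_lip (phi := fun v => v + e)).
    by move=> ? ? ? _; apply: near_add.
  by move=> v hv; apply: E_C; exact: (sl_add SE hv he).
move=> hx; apply: (C_lip (phi := fun v => x + v)).
  by move=> ? ? ? _; apply: near_addl.
by move=> v hv; apply: step1.
Qed.

Lemma C_join x y : C x -> C y -> C (join x y).
Proof.
have step1 : forall e, E e -> forall x, C x -> C (join x e).
  move=> e he; apply: (C_lip (phi := fun v => join v e)).
    by move=> ? ? ? g0 h; apply: near_join => //; apply: near_refl.
  by move=> v hv; apply: E_C; exact: (sl_join SE hv he).
move=> hx; apply: (C_lip (phi := fun v => join x v)).
  by move=> ? ? ? g0 h; apply: near_join => //; apply: near_refl.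
by move=> v hv; apply: step1.
Qed.

Lemma C_sl : sublattice le C.
Proof.
split.
- by apply: E_C; exact: (sl_0 SE).
- exact: C_add.
- by move=> a x; apply: C_scale.
- by move=> x y s hx hy /sup_pair_eq ->; apply: C_join.
Qed.

Lemma C_sup B s : incl B C -> (exists b, B b) -> is_sup_in le SA B s -> C s.
Proof.
move=> hBC [b0 hb0] [[_ hub] hlub].
pose J := {c : V | C c /\ c ⊑ s}.
pose leI (i j : J) := sval i ⊑ sval j.
have dJ : directed leI.
  split; first by constructor; exists b0; split; [apply: hBC|apply: hub].
  split; first by move=> i; apply: lrefl.
  split; first by move=> i j k; apply: ltr.
  move=> i j.
  have hk : C (join (sval i) (sval j)) /\ join (sval i) (sval j) ⊑ s.
    split; first by apply: C_join; [exact: (proj1 (proj2_sig i))|exact: (proj1 (proj2_sig j))].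
    by apply: join_lub; [exact: (proj2 (proj2_sig i))|exact: (proj2 (proj2_sig j))].
  by exists (exist (fun c => C c /\ c ⊑ s) _ hk); split; rewrite /leI /=; jj.
apply: (proj2 C_closed J leI (fun i => sval i) s dJ (fun i => proj1 (proj2_sig i)) I).
exists (fun h => exists i : J, h = s - sval i); split=> //; split.
  split; first split; [constructor|move=> h /= [i ->]; apply: lsub0; exact: (proj2 (proj2_sig i))|].
  move=> w [_ hw]; apply: (@lself s); apply: hlub; split; [constructor|move=> b hb].
  apply: lswap; apply: hw.
  by exists (exist (fun c => C c /\ c ⊑ s) b (conj (hBC b hb) (hub b hb))).
move=> h [i0 ->]; exists i0 => i hi; split.
  by rewrite subKr.
apply: (ltr (proj2 (proj2_sig i))); apply: laddg; apply: lsub0.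
exact: (proj2 (proj2_sig i0)).
Qed.


Lemma lswap2 p d f : p ⊑ d - f -> f + p ⊑ d.
Proof. by move=> h; have := laddr f h; rewrite subrK addrC. Qed.
Lemma lswap3 a b c : a + b ⊑ c -> b ⊑ c - a.
Proof. by move=> h; have := laddr (- a) h; rewrite addrC addKr. Qed.

Definition Lset y := fun f => E f /\ f ⊑ y.
Definition Uset y := fun f => E f /\ y ⊑ f.
Definition Inner y := is_sup_in le SA (Lset y) y.
Definition Outer y := is_inf_in le SA (Uset y) y.

Lemma I1 D y e0 : incl D E -> (exists d, D d) -> is_sup_in le SA D y ->
  E e0 -> y ⊑ e0 -> Outer y.
Proof.
move=> DE [d0 hd0] [[_ yub] ylub] he0 hye0.
pose H := fun h => exists f d, Uset y f /\ D d /\ h = f - d.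
have HE : incl H E.
  by move=> h [f [d [[Ef _] [Dd ->]]]]; exact: (sl_subr SE Ef (DE d Dd)).
have Hinf : is_inf_in le E H 0.
  split.
    split; [exact: (sl_0 SE)|move=> h [f [d [[_ yf] [Dd ->]]]]].
    by apply: lsub0; exact: (ltr (yub d Dd) yf).
  move=> t [Et tlb].
  pose p := join t 0.
  have Ep : E p := sl_join SE Et (sl_0 SE).
  have plb : forall f d, Uset y f -> D d -> p ⊑ f - d.
    move=> f d hf hd; apply: join_lub; first by apply: tlb; exists f, d.
    by apply: lsub0; exact: (ltr (yub d hd) hf.2).
  have step : forall n : nat, Uset y (e0 - n%:R *: p).
    elim=> [|n IH]; first by rewrite scale0r subr0; split.
    have E' : E (e0 - n.+1%:R *: p) := sl_subr SE he0 (sl_scale SE _ Ep).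
    split=> //.
    have -> : e0 - n.+1%:R *: p = (e0 - n%:R *: p) - p.
      by rewrite mulrSr scalerDl scale1r opprD addrA.
    apply: ylub; split; [constructor|move=> d hd].
    by apply: lswap; apply: plb.
  have p0 : p = 0.
    apply: (archV (v := e0 - d0)) => [|n]; first exact: join_r.
    have [_ h] := step n.
    by apply: lswap; exact: (ltr (yub d0 hd0) h).
  by rewrite -p0; apply: join_l.
have HV := regEV HE Hinf.
split; first by split; [constructor|move=> f [_ hf]].
move=> w [_ wlb]; apply: lle0; apply: (inf_le0 HV) => h [f [d [hf [hd ->]]]].
exact: (ladd2 (wlb f hf) (lopp (yub d hd))).
Qed.

Lemma I2 D y e0 : incl D E -> (exists d, D d) -> is_inf_in le SA D y ->
  E e0 -> e0 ⊑ y -> Inner y.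
Proof.
move=> DE [d0 hd0] [[_ ylb] yglb] he0 hye0.
pose H := fun h => exists d f, D d /\ Lset y f /\ h = d - f.
have HE : incl H E.
  by move=> h [d [f [Dd [[Ef _] ->]]]]; exact: (sl_subr SE (DE d Dd) Ef).
have Hinf : is_inf_in le E H 0.
  split.
    split; [exact: (sl_0 SE)|move=> h [d [f [Dd [[_ fy] ->]]]]].
    by apply: lsub0; exact: (ltr fy (ylb d Dd)).
  move=> t [Et tlb].
  pose p := join t 0.
  have Ep : E p := sl_join SE Et (sl_0 SE).
  have plb : forall d f, D d -> Lset y f -> p ⊑ d - f.
    move=> d f hd hf; apply: join_lub; first by apply: tlb; exists d, f.
    by apply: lsub0; exact: (ltr hf.2 (ylb d hd)).
  have step : forall n : nat, Lset y (e0 + n%:R *: p).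
    elim=> [|n IH]; first by rewrite scale0r addr0; split.
    have E' : E (e0 + n.+1%:R *: p) := sl_add SE he0 (sl_scale SE _ Ep).
    split=> //.
    have -> : e0 + n.+1%:R *: p = (e0 + n%:R *: p) + p.
      by rewrite mulrSr scalerDl scale1r addrA.
    apply: yglb; split; [constructor|move=> d hd].
    by apply: lswap2; apply: plb.
  have p0 : p = 0.
    apply: (archV (v := y - e0)) => [|n]; first exact: join_r.
    have [_ h] := step n.
    exact: lswap3.
  by rewrite -p0; apply: join_l.
have HV := regEV HE Hinf.
split; first by split; [constructor|move=> f [_ hf]].
move=> z [_ zub]; apply: lle0; apply: (inf_le0 HV) => h [d [f [hd [hf ->]]]].
exact: (ladd2 (ylb d hd) (lopp (zub f hf))).
Qed.


Lemma lsubl a b c : a ⊑ b + c -> a - b ⊑ c.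
Proof. by move=> h; have := laddr (- b) h; rewrite [b + c]addrC addrK. Qed.
Lemma lswap5 a g z : a - g ⊑ z -> a - z ⊑ g.
Proof.
move=> h; have := laddr (g - z) h.
by rewrite addrA subrK addrCA subrr addr0.
Qed.

Lemma inner_lim e (J : Type) (leI : J -> J -> Prop) (y : J -> V) yl G :
  E e -> directed leI ->
  (forall i, Inner (y i) /\ 0 ⊑ y i /\ y i ⊑ e) ->
  is_inf_in le SA G 0 ->
  (forall g, G g -> exists i0, forall i, leI i0 i -> near yl (y i) g) ->
  Inner yl.
Proof.
move=> Ee [_ [Irefl [_ dir]]] hy hG hc.
have hout : forall i, Outer (y i).
  move=> i; have [hi [h0 he]] := hy i.
  apply: (I1 (D := Lset (y i)) (e0 := e)) => //; first by move=> f [].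
  by exists 0; split; [exact: (sl_0 SE)|].
pose D a := fun f => E f /\ exists b, leI a b /\ y b ⊑ f.
have hl : forall a, exists l, is_inf_in le SA (D a) l.
  move=> a; apply: inf_ex.
    by exists e; split=> //; exists a; split; [apply: Irefl|exact: (hy a).2.2].
  by exists 0 => f [_ [b [_ hb]]]; exact: (ltr (hy b).2.1 hb).
split; first by split; [constructor|move=> f [_ hf]].
move=> z [_ zub]; apply: lle0; apply: (inf_le0 hG) => g hg.
have [i0 hi0] := hc g hg.
have [l hlinf] := hl i0.
have [[_ llb] lglb] := hlinf.
have h1 : forall b, leI i0 b -> l ⊑ y b.
  move=> b hb; have [_ og] := hout b; apply: og.
  split; [constructor|move=> f hf]; apply: llb; split; first exact: hf.1.
  by exists b; split=> //; exact: hf.2.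
have h2 : yl - g ⊑ l.
  apply: lglb; split; [constructor|move=> f [Ef [b [hb hbf]]]].
  exact: (ltr (hi0 b hb).1 hbf).
have h3 : l ⊑ yl.
  apply: lle0; apply: (inf_le0 hG) => g' hg'.
  have [i1 hi1] := hc g' hg'.
  have [k [hk1 hk2]] := dir i0 i1.
  apply: lsubl; exact: (ltr (h1 k hk1) (hi1 k hk2).2).
have h4 : Inner l.
  apply: (I2 (D := D i0) (e0 := 0)) => //.
  - by move=> f [].
  - by exists e; split=> //; exists i0; split; [apply: Irefl|exact: (hy i0).2.2].
  - exact: (sl_0 SE).
  - apply: lglb; split; [constructor|move=> f [_ [b [_ hb]]]].
    exact: (ltr (hy b).2.1 hb).
have h5 : l ⊑ z.
  apply: (proj2 h4); split; [constructor|move=> f [Ef hf]].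
  by apply: zub; split=> //; exact: (ltr hf h3).
apply: lswap5; exact: (ltr h2 h5).
Qed.


Lemma C_inner x : C x -> forall e, E e -> 0 ⊑ e -> Inner (meet (join x 0) e).
Proof.
move: x; apply: (C_min (A := fun v => forall e, E e -> 0 ⊑ e -> Inner (meet (join v 0) e))).
  split=> // J leI x f dJ hx _ [G [_ [hG hconv]]] e Ee e0.
  apply: (inner_lim (e := e) (leI := leI) (y := fun i => meet (join (x i) 0) e) (G := G)) => //.
    move=> i; split; first exact: hx i e Ee e0.
    by split; [apply: meet_glb => //; apply: join_r|apply: meet_r].
  move=> g hg; have [i0 hi0] := hconv g hg; exists i0 => i hi.
  have g0 := inf_ge0 hG hg.
  apply: near_meet; last exact: near_refl.
  by apply: near_join; [exact: hi0 i hi|exact: near_refl].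
move=> v hv e Ee e0.
have Em : E (meet (join v 0) e) := sl_meet SE (sl_join SE hv (sl_0 SE)) Ee.
split; first by split; [constructor|move=> f [_ hf]].
by move=> z [_ zub]; apply: zub; split=> //; apply: lrefl.
Qed.

Lemma C_band w : 0 ⊑ w -> (forall f, E f -> meet (join f (- f)) w = 0) ->
  forall h, C h -> meet (join h (- h)) w = 0.
Proof.
move=> w0 hw; apply: (C_min (A := fun v => meet (join v (- v)) w = 0)) => //.
split=> // J leI x f dJ hx _ [G [_ [hG hconv]]].
apply: lanti; last by apply: meet_glb => //; apply: abs_ge0.
apply: (inf_le0 hG) => g hg.
have [i0 hi0] := hconv g hg.
have g0 := inf_ge0 hG hg.
have hn : near (meet (join f (- f)) w) (meet (join (x i0) (- x i0)) w) g.
  apply: near_meet; last exact: near_refl.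
  have hi := hi0 i0 (proj1 (proj2 dJ) i0).
  by apply: near_join => //; apply: near_opp.
have := hn.1; rewrite hx => h; apply: lle0; exact: h.
Qed.

Lemma dense h : C h -> lt le 0 h -> exists e, E e /\ lt le 0 e /\ e ⊑ h.
Proof.
move=> hh [h0 hne].
case: (classic (exists f, E f /\ meet (join f (- f)) h <> 0)) => [[f [Ef hf]]|hno].
  have Ee : E (join f (- f)) := sl_join SE Ef (sl_opp SE Ef).
  have e0 := abs_ge0 f.
  have hI := C_inner hh Ee e0.
  rewrite join_id // in hI.
  have m0 : 0 ⊑ meet h (join f (- f)) by apply: meet_glb.
  case: (classic (exists f', Lset (meet h (join f (- f))) f' /\ ~ f' ⊑ 0)) => [[f' [[Ef' f'm] nf]]|hno'].
    exists (join f' 0); split; first exact: (sl_join SE Ef' (sl_0 SE)).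
    split; first split; first exact: join_r.
      by move=> eq; apply: nf; rewrite eq; apply: join_l.
    exact: (ltr (join_lub f'm m0) (meet_l _ _)).
  have : meet h (join f (- f)) ⊑ 0.
    apply: (proj2 hI); split; [constructor|move=> f' hf'].
    by apply: NNPP => nf; apply: hno'; exists f'.
  move=> m0'; case: hf; rewrite meetC; exact: lanti.
have hb : forall f, E f -> meet (join f (- f)) h = 0.
  by move=> f Ef; apply: NNPP => ne; apply: hno; exists f.
have := C_band h0 hb hh.
rewrite abs_id // meet_id; last exact: lrefl.
by move=> e; case: hne.
Qed.

Definition Sx x := fun f => E f /\ 0 ⊑ f /\ f ⊑ x.

Lemma Lsup v : C v -> 0 ⊑ v -> is_sup_in le SA (Sx v) v.
Proof.
move=> hv v0.
have [s hs] : exists s, is_sup_in le SA (Sx v) s.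
  apply: sup_ex; first by exists 0; split; [exact: (sl_0 SE)|split=> //; exact: lrefl].
  by exists v => f [_ [_ hf]].
have Cs : C s.
  apply: (C_sup (B := Sx v)) => //; first by move=> f [Ef _]; apply: E_C.
  by exists 0; split; [exact: (sl_0 SE)|split=> //; exact: lrefl].
have sv : s ⊑ v by apply: (proj2 hs); split; [constructor|move=> f [_ [_ hf]]].
suff e : s = v by move: hs; rewrite e.
case: (classic (s = v)) => // ne; exfalso.
have Cd : C (v - s) := C_add hv (C_opp Cs).
have d0 : 0 ⊑ v - s := lsub0 sv.
have dne : 0 <> v - s by move=> eq; apply: ne; symmetry; apply/eqP; rewrite -subr_eq0 -eq.
have [e [Ee [[e0 ene] ed]]] := dense Cd (conj d0 dne).
have hn : forall n : nat, Sx v (n%:R *: e).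
  elim=> [|n IH]; first by rewrite scale0r; split; [exact: (sl_0 SE)|split=> //; exact: lrefl].
  split; first exact: (sl_scale SE _ Ee).
  split; first by have := lscale (ler0n R n.+1) e0; rewrite scaler0.
  rewrite mulrSr scalerDl scale1r.
  have := ladd2 ((proj2 (proj1 hs)) _ IH) ed.
  by rewrite [s + _]addrC subrK.
by apply: ene; symmetry; apply: (archV e0 (fun n => proj2 (proj2 (hn n)))).
Qed.

Lemma C_uc : universally_complete_in le C.
Proof.
split.
  move=> G GC [g0 hg0] [u [Cu uub]].
  have [s hs] := sup_ex (ex_intro _ g0 hg0) (ex_intro _ u uub).
  have Cs := C_sup GC (ex_intro _ g0 hg0) hs.
  exists s; split; first by split=> //; exact: (proj2 (proj1 hs)).
  by move=> y [_ yub]; apply: (proj2 hs); split.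
move=> D DC hdisj.
case: (classic (exists d, D d)) => [[d0 hd0]|hno]; last first.
  exists 0, 0; split; first by apply: E_C; exact: (sl_0 SE).
  split; first by apply: E_C; exact: (sl_0 SE).
  by move=> g hg; case: hno; exists g.
have [l [u [_ [_ hlu]]]] := (proj2 UC) D (fun _ _ => I) hdisj.
have [s hs] := sup_ex (ex_intro _ d0 hd0) (ex_intro _ u (fun g hg => proj2 (hlu g hg))).
have [m hm] : exists m, is_sup_in le SA (fun z => D (- z)) m.
  apply: sup_ex; first by exists (- d0); rewrite opprK.
  by exists (- l) => z hz; apply: loppK; rewrite opprK; exact: (proj1 (hlu _ hz)).
exists (- m), s; split.
  apply: C_opp; apply: (C_sup (B := fun z => D (- z))) hm => //.
    by move=> z hz; rewrite -[z]opprK; apply: C_opp; apply: DC.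
  by exists (- d0); rewrite opprK.
split; first exact: (C_sup DC (ex_intro _ d0 hd0) hs).
move=> g hg; split; last exact: (proj2 (proj1 hs)).
apply: loppK; rewrite opprK; apply: (proj2 (proj1 hm)); by rewrite opprK.
Qed.


Lemma H2a v : order_closure_in le F E v -> C v /\ F v.
Proof.
move=> hv; apply: (hv (fun x => C x /\ F x)); last by move=> x hx; split; [apply: E_C|apply: EF].
split; first by move=> x [].
move=> J leI x f dJ hx Ff [G [GF [hG hconv]]]; split=> //.
apply: (proj2 C_closed J leI x f dJ (fun i => proj1 (hx i)) I).
exists G; split=> //; split=> //; exact: regFV GF hG.
Qed.

Lemma near_pq p q a0 b0 a b : a0 ⊑ a -> b0 ⊑ b -> a ⊑ p -> a0 ⊑ p ->
  b ⊑ q -> b0 ⊑ q -> near (p - q) (a - b) ((p - a0) + (q - b0)).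
Proof.
move=> ha hb hap ha0p hbq hb0q; split.
  have -> : p - q - (p - a0 + (q - b0)) = (a0 - q) + (b0 - q).
    rewrite !opprD !opprK !addrA [p - q - p]addrAC subrr add0r.
    by rewrite [- q + a0]addrC addrAC.
  have := ladd2 (ladd2 ha (lopp hbq)) (lle0K hb0q).
  by rewrite addr0.
have -> : p - q + (p - a0 + (q - b0)) = (p - b0) + (p - a0).
  rewrite !addrA [p - q + p]addrAC [p + p - q - a0]addrAC subrK [p - b0 + p]addrAC; exact: addrAC.
have := ladd2 (ladd2 hap (lopp hb)) (lsub0 ha0p).
by rewrite addr0.
Qed.

Lemma Sx_join x a b : Sx x a -> Sx x b -> Sx x (join a b).
Proof.
move=> [Ea [a0 ax]] [Eb [b0 bx]]; split; first exact: (sl_join SE Ea Eb).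
by split; [exact: (ltr a0 (join_l _ _))|apply: join_lub].
Qed.
Lemma Sx0 x : 0 ⊑ x -> Sx x 0.
Proof. by move=> h; split; [exact: (sl_0 SE)|split=> //; exact: lrefl]. Qed.

Lemma H2b v : C v -> F v -> order_closure_in le F E v.
Proof.
move=> Cv Fv A hA hEA.
pose p := join v 0; pose q := join (- v) 0.
have C0 : C 0 by apply: E_C; exact: (sl_0 SE).
have Cp : C p := C_join Cv C0.
have Cq : C q := C_join (C_opp Cv) C0.
have p0 : 0 ⊑ p := join_r _ _.
have q0 : 0 ⊑ q := join_r _ _.
have Fp : F p := sl_join SF Fv (sl_0 SF).
have Fq : F q := sl_join SF (sl_opp SF Fv) (sl_0 SF).
have Sp := Lsup Cp p0.
have Sq := Lsup Cq q0.
pose J := {ab : V * V | Sx p ab.1 /\ Sx q ab.2}.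
pose leI (i j : J) := (sval i).1 ⊑ (sval j).1 /\ (sval i).2 ⊑ (sval j).2.
have dJ : directed leI.
  split; first by constructor; exists (0, 0); split; apply: Sx0.
  split; first by move=> i; split; apply: lrefl.
  split; first by move=> i j k [h1 h2] [h3 h4]; split; [exact: (ltr h1 h3)|exact: (ltr h2 h4)].
  move=> [[a b] [ha hb]] [[a' b'] [ha' hb']].
  exists (exist (fun ab : V * V => Sx p ab.1 /\ Sx q ab.2) (join a a', join b b')
     (conj (Sx_join ha ha') (Sx_join hb hb'))).
  by split; split; rewrite /=; jj.
have hv : v = p - q by rewrite posneg.
apply: (proj2 hA J leI (fun i => (sval i).1 - (sval i).2) v dJ _ Fv).
  move=> i; apply: hEA; exact: (sl_subr SE (proj1 (proj1 (proj2_sig i))) (proj1 (proj2 (proj2_sig i)))).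
exists (fun g => exists i : J, g = (p - (sval i).1) + (q - (sval i).2)).
split.
  move=> g [i ->]; apply: (sl_add SF).
    exact: (sl_subr SF Fp (EF (proj1 (proj1 (proj2_sig i))))).
  exact: (sl_subr SF Fq (EF (proj1 (proj2 (proj2_sig i))))).
split.
  split.
    split; first exact: (sl_0 SF).
    move=> g /= [[[a b] [[_ [_ ha]] [_ [_ hb]]]] ->] /=.
    by have := ladd2 (lsub0 ha) (lsub0 hb); rewrite addr0.
  move=> w [_ wlb].
  have step : forall b, Sx q b -> w ⊑ q - b.
    move=> b hb.
    have : p ⊑ p - (w - (q - b)).
      apply: (proj2 Sp); split; [constructor|move=> a ha].
      apply: lswap; apply: lsubl; rewrite addrC.
      exact: (wlb _ (ex_intro _ (exist (fun ab : V * V => Sx p ab.1 /\ Sx q ab.2) (a, b) (conj ha hb)) erefl)).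
    by move/lself => h; apply: lle0.
  apply: (@lself q); apply: (proj2 Sq); split; [constructor|move=> b hb].
  by apply: lswap; apply: step.
move=> g [i0 ->]; exists i0 => i [h1 h2]; rewrite hv.
have [[_ [_ ha]] [_ [_ hb]]] := proj2_sig i.
have [[_ [_ ha0]] [_ [_ hb0]]] := proj2_sig i0.
exact: near_pq.
Qed.


Lemma main_sec : universal_completion_of le E C /\
  (forall v, order_closure_in le F E v <-> (C v /\ F v)).
Proof.
split.
  split; first exact: C_sl.
  split; first exact: C_uc.
  split; first exact: E_C.
  split; first exact: SE.
  exact: dense.
move=> v; split; first exact: H2a.
by move=> [h1 h2]; apply: H2b.
Qed.

End Basics.

Theorem corollary9p4 (R : realType) (V : lmodType R) (le : V -> V -> Prop)
    (F E : V -> Prop) :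
  vector_lattice le ->
  universally_complete_in le (setAll (V:=V)) ->
  sublattice le F -> archimedean_in le F -> order_dense_in le F (setAll (V:=V)) ->
  sublattice le E -> incl E F -> regular_in le E F ->
  universal_completion_of le E (order_closure_in le (setAll (V:=V)) E) /\
  (forall v, order_closure_in le F E v <->
             (order_closure_in le (setAll (V:=V)) E v /\ F v)).
Proof.
move=> VL UC SF AF DF SE EF RE.
exact: (main_sec VL UC SF DF SE EF RE).
Qed.
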